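(* Let $0<k<n$ and $d$ be integers. Then $C_{12}>0$ for every allowable critical data set $A_c=(\alpha_c,n_1,d_1,k_1,n_2,d_2,k_2)$ for type $(n,d,k)$ with $k_1=1$.
   Context: Write $d=na-t$ with integers $a,t$, $0\le t<n$, and $ka=l(n-k)+t+m$ with integers $l,m$, $0\le m<n-k$. A critical data set for type $(n,d,k)$ is a tuple $A_c=(\alpha_c,n_1,d_1,k_1,n_2,d_2,k_2)$ with integers $n_i\ge1$, $k_i\ge0$, $d_i$ such that $n_1+n_2=n$, $d_1+d_2=d$, $k_1+k_2=k$, $\frac{d_2}{n_2}>\frac{d_1}{n_1}$, $\frac{k_1}{n_1}>\frac{k_2}{n_2}$, and $\alpha_c=\frac{d_2n_1-d_1n_2}{n_2k_1-n_1k_2}$. It is allowable if moreover $\frac tk<\alpha_c<\frac{ln+t}{k}$, $d\ge\frac1k(n^2-1)-(n-k)$, $d_1\ge\frac1{k_1}(n_1^2-1)-(n_1-k_1)$, and either ($k_2=0$ and $n_2=1$) or ($k_2\ge1$ and $d_2\ge\frac1{k_2}(n_2^2-1)-(n_2-k_2)$). Define $C_{12}=-n_1n_2-d_2n_1+d_1n_2+k_1(d_2+n_2-k_2)$. *)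

(* Defs.v *)
From mathcomp Require Import all_boot all_order all_algebra.
Set Implicit Arguments. Unset Strict Implicit. Unset Printing Implicit Defensive.
Import Order.TTheory GRing.Theory Num.Theory.
Local Open Scope ring_scope.

Definition Q (z : int) : rat := z%:~R.

Definition type_aux (n d k a t l m : int) : Prop :=
  [/\ d = n * a - t, 0 <= t < n, k * a = l * (n - k) + t + m & 0 <= m < n - k].

Definition critical_data_set (n d k : int) (alpha : rat)
  (n1 d1 k1 n2 d2 k2 : int) : Prop :=
  [/\ 1 <= n1, 1 <= n2, 0 <= k1 & 0 <= k2] /\
  [/\ n1 + n2 = n, d1 + d2 = d & k1 + k2 = k] /\
  [/\ Q d1 / Q n1 < Q d2 / Q n2,
      Q k2 / Q n2 < Q k1 / Q n1
    & alpha = Q (d2 * n1 - d1 * n2) / Q (n2 * k1 - n1 * k2)].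

Definition deg_bound (n d k : int) : Prop :=
  Q (n ^+ 2 - 1) / Q k - Q (n - k) <= Q d.

(* Allowable critical data set (t, l are the auxiliary integers of the type). *)
Definition allowable (n d k t l : int) (alpha : rat)
  (n1 d1 k1 n2 d2 k2 : int) : Prop :=
  [/\ critical_data_set n d k alpha n1 d1 k1 n2 d2 k2,
      Q t / Q k < alpha < Q (l * n + t) / Q k,
      deg_bound n d k,
      deg_bound n1 d1 k1
    & (k2 = 0 /\ n2 = 1) \/ (1 <= k2 /\ deg_bound n2 d2 k2)].

Definition C12 (n1 d1 k1 n2 d2 k2 : int) : int :=
  - n1 * n2 - d2 * n1 + d1 * n2 + k1 * (d2 + n2 - k2).

(* Main.v *)
Require Import Defs.
From mathcomp Require Import all_boot all_order all_algebra.
From mathcomp Require Import zify ring.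
Import Order.TTheory GRing.Theory Num.Theory.
Local Open Scope ring_scope.

Lemma ltQ (a b c e : int) : 0 < b -> 0 < e -> (Q a / Q b < Q c / Q e) = (a * e < c * b).
Proof.
move=> hb he.
rewrite ltr_pdivrMr ?ltr0z // mulrAC ltr_pdivlMr ?ltr0z // /Q -!rmorphM /= ltr_int.
done.
Qed.

Lemma leQ (n d k : int) : 0 < k -> deg_bound n d k -> n ^+ 2 - 1 <= (d + (n - k)) * k.
Proof.
move=> hk; rewrite /deg_bound lerBlDr ler_pdivrMr ?ltr0z // /Q.
by rewrite -rmorphD -rmorphM ler_int.
Qed.

Lemma key (n1 n2 k2 q x y : int) : 1 <= n1 -> 1 <= k2 -> n1 * k2 + 1 <= n2 ->
  1 <= x -> y <= k2 * x - 1 ->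
  n2 ^+ 2 - 1 <= (y + q * (n2 - k2) + (n2 - k2)) * k2 ->
  0 < n2 * (x - n1 + 1) - (n1 - 1) * y + k2 * (q * (n1 - 1) - 1).
Proof.
move=> h1 h2 h3 h4 h5 h6.
set C := n2 * (x - n1 + 1) - (n1 - 1) * y + k2 * (q * (n1 - 1) - 1).
have hE : 0 < (n2 - k2) by nia.
suff : 0 < (n2 - k2) * C by rewrite pmulr_rgt0.
have A : k2 * q * (n2 - k2) >= n2 * (n2 - k2) + k2 - 1 - k2 ^+ 2 * (x - 1) by nia.
have B : C >= x * (n2 - n1 * k2 + k2) - (n1 - 1) * (n2 - 1) + k2 * q * (n1 - 1) - k2 by rewrite /C; nia.
have P2 : 0 <= (n2 - k2) * (C - (x * (n2 - n1 * k2 + k2) - (n1 - 1) * (n2 - 1) + k2 * q * (n1 - 1) - k2)).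
  by apply: mulr_ge0; lia.
have A2 : (n1 - 1) * (k2 * q * (n2 - k2)) >= (n1 - 1) * (n2 * (n2 - k2) + k2 - 1 - k2 ^+ 2 * (x - 1)).
  by apply: ler_wpM2l; lia.
have F1 : (n2 - k2) * (n2 - n1 * k2 + k2) >= ((n1 - 1) * k2 + 1) * (k2 + 1).
  by apply: ler_pM; nia.
have P1 : 0 <= (x - 1) * ((n2 - k2) * (n2 - n1 * k2 + k2) - (n1 - 1) * k2 ^+ 2).
  apply: mulr_ge0; first lia.
  rewrite subr_ge0; apply: le_trans F1; nia.
nia.
Qed.

Lemma case0 (n1 x y z : int) : 1 <= n1 -> 1 <= x -> y <= - 1 ->
  0 < 1 * (x - n1 + 1) - (n1 - 1) * y + 0 * z.
Proof. move=> *; nia. Qed.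

Lemma posx (x k2 : int) : 0 <= k2 -> 0 < x * (1 + k2) -> 1 <= x.
Proof. move=> *; nia. Qed.

Theorem proposition5p5 (n d k : int) :
  0 < k -> k < n ->
  forall a t l m : int, type_aux n d k a t l m ->
  forall (alpha : rat) (n1 d1 k1 n2 d2 k2 : int),
    allowable n d k t l alpha n1 d1 k1 n2 d2 k2 ->
    k1 = 1 ->
    0 < C12 n1 d1 k1 n2 d2 k2.
Proof.
move=> hk hkn a t l m [hd /andP[ht0 htn] hka /andP[hm0 hmn]] alpha n1 d1 k1 n2 d2 k2.
move=> [[[hn1 hn2 hk10 hk20] [[hn hd12 hk12] [hD hE hal]]] hab _ hb1 hb2] hk1.
move/andP: hab => [_ hhi].
subst k1.
have {}hD : d1 * n2 < d2 * n1 by rewrite -ltQ //; lia.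
have {}hE : k2 * n1 < 1 * n2 by rewrite -ltQ //; lia.
have {}hb1 := (@leQ n1 d1 1 ltr01 hb1).
rewrite hal in hhi.
have {}hhi : (d2 * n1 - d1 * n2) * k < (l * n + t) * (n2 * 1 - n1 * k2) by rewrite -ltQ //; lia.
set q := l + a.
have e1 : d - q * (n - k) - m = k * a - l * (n - k) - t - m by rewrite /q hd; ring.
have hq1 : q * (n - k) <= d by rewrite hka in e1; lia.
have hq2 : l * n + t = q * n - d by rewrite /q hd; ring.
rewrite hq2 in hhi.
have hid : (q * n - d) * (n2 * 1 - n1 * k2) - (d2 * n1 - d1 * n2) * k
    = n * ((n2 - n1 * k2) * q - d2 + k2 * d1).
  rewrite -hn -hk12 -hd12; ring.
have hq3 : d2 - k2 * d1 < (n2 - n1 * k2) * q.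
  have : 0 < n * ((n2 - n1 * k2) * q - d2 + k2 * d1) by rewrite -hid subr_gt0.
  rewrite pmulr_rgt0; last lia.
  lia.
set x := d1 - q * (n1 - 1).
set y := d2 - q * (n2 - k2).
have e2 : x + y = d - q * (n - k) by rewrite /x /y -hn -hk12 -hd12; ring.
have hxy : 0 <= x + y by lia.
have e3 : y - k2 * x = d2 - k2 * d1 - (n2 - n1 * k2) * q by rewrite /x /y; ring.
have hy : y <= k2 * x - 1 by lia.
have e4 : x * (1 + k2) = (x + y) - (y - k2 * x) by ring.
have hx : 1 <= x.
  have h0 : 0 < x * (1 + k2) by lia.
  exact: posx hk20 h0.
have hC : C12 n1 d1 1 n2 d2 k2 = n2 * (x - n1 + 1) - (n1 - 1) * y + k2 * (q * (n1 - 1) - 1).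
  rewrite /C12 /x /y; ring.
rewrite hC.
case: hb2 => [[hk0 hn1']|[hk2 hb2]].
  rewrite hk0 hn1'; apply: case0 => //; rewrite hk0 mul0r in hy; lia.
apply: key => //; try lia.
have := @leQ n2 d2 k2 ltac:(lia) hb2.
rewrite /y; congr (_ <= _); ring.
Qed.
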